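(* Consider the classical secretary problem with $n$ candidates: $n$ candidates with distinct ranks arrive one at a time in uniformly random order (all $n!$ orders equally likely); after seeing the $k$-th candidate the decision maker knows only the relative ranks of the first $k$ candidates, must decide immediately and irrevocably whether to stop, and wins if the candidate at which he stops is the overall best. Let $V(n)$ be the maximal win probability over all (non-anticipating) stopping rules. For $k\in\{1,\dots,n\}$ let the threshold rule $\tau_k$ stop at the first candidate with index $j\ge k$ that is relatively best (better than all candidates $1,\dots,j-1$), and stop at candidate $n$ if there is none. Then: (i) $V(n)$ is strictly decreasing in $n$ for $n\ge 3$, i.e. $V(n+1)<V(n)$ for all $n\ge3$; (ii) for every $n\ge 3$ the optimal threshold is unique, i.e. there is exactly one $k\in\{1,\dots,n\}$ for which the win probability of $\tau_k$ is maximal among $\tau_1,\dots,\tau_n$.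
   Context: For $k\ge2$ the win probability of $\tau_k$ equals $\frac{k-1}{n}\sum_{j=k-1}^{n-1}\frac1j$, and that of $\tau_1$ is $1/n$; an optimal threshold rule achieves $V(n)$. *)

(* Defs.v *)
From HB Require Import structures.
From mathcomp Require Import all_boot all_order all_algebra all_fingroup.
From mathcomp Require Import boolp classical_sets reals.
Set Implicit Arguments. Unset Strict Implicit. Unset Printing Implicit Defensive.
Import Order.TTheory GRing.Theory Num.Theory.
Local Open Scope ring_scope.
Local Open Scope classical_set_scope.

(* A configuration of the secretary problem with n candidates is a
   permutation s : 'S_n; candidate number j (0-based arrival position,
   i.e. the (j+1)-th to arrive) has absolute rank s j, rank 0 = overall best. *)

Definition relrank (n : nat) (s : 'S_n) (j : 'I_n) : nat :=
  #|[set i : 'I_n | (i < j)%N && (s i < s j)%N]|.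

(* the information available after seeing the first k candidates:
   the relative ranks of candidates 1..k (this determines exactly the
   relative order of the first k candidates) *)
Definition obs (n : nat) (s : 'S_n) (k : nat) : seq nat :=
  map (relrank s) (filter (fun j : 'I_n => (j < k)%N) (enum 'I_n)).

(* A (non-anticipating) stopping rule: after seeing the t-th candidate
   (t = 1..n), decide whether to stop using only t and the observation. *)
Definition rule := nat -> seq nat -> bool.

Definition wins (n : nat) (r : rule) (s : 'S_n) : bool :=
  [exists j : 'I_n,
     [&& r j.+1 (obs s j.+1),
         [forall i : 'I_n, (i < j)%N ==> ~~ r i.+1 (obs s i.+1)]
       & (val (s j) == 0)%N]].

Definition winprob (R : realType) (n : nat) (r : rule) : R :=
  #|[set s : 'S_n | wins r s]|%:R / (n`!)%:R.

Definition V (R : realType) (n : nat) : R :=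
  sup [set winprob R n r | r in [set: rule]].

Definition thr (n k : nat) : rule :=
  fun t o => ((k <= t)%N && (last 0%N o == 0%N)) || (t == n).

(* Main.v *)
Require Import Defs.
From HB Require Import structures.
From mathcomp Require Import all_boot all_order all_algebra all_fingroup.
From mathcomp Require Import boolp classical_sets reals.
From mathcomp Require Import zify ring lra.
Import Order.TTheory GRing.Theory Num.Theory.
Set Implicit Arguments. Unset Strict Implicit. Unset Printing Implicit Defensive.
Fixpoint comp (d : nat) (p : seq nat) : seq (seq nat) :=
  if d is d'.+1 then flatten [seq comp d' (rcons p v) | v <- iota 0 (size p).+1]
  else [:: p].

Lemma comp_memP d p c :
  reflect [/\ size c = size p + d, take (size p) c = p &
            forall i, size p <= i < size c -> nth 0 c i <= i]
          (c \in comp d p).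
Proof.
elim: d p => [|d IH] p.
  rewrite inE addn0; apply: (iffP eqP) => [->|[H1 H2 _]].
    by split=> //; [rewrite take_size | move=> i; case/andP=> a b; lia].
  by rewrite -[RHS]H2 -H1 take_size.
rewrite [comp _.+1 _]/comp -/comp; apply: (iffP flatten_mapP) => [[v Hv /IH [H1 H2 H3]]|[H1 H2 H3]].
  rewrite size_rcons in H1 H2 H3; rewrite mem_iota in Hv.
  have Hm : size p < size c by lia.
  split; first by lia.
    by rewrite -(take_takel _ (leqnSn _)) H2 -cats1 take_size_cat.
  move=> i /andP [Hi1 Hi2]; case: (ltngtP i (size p)) => Hi; first lia.
    by apply: H3; lia.
  rewrite Hi; have := congr1 (nth 0 ^~ (size p)) H2.
  rewrite /= nth_take // nth_rcons ltnn eqxx => ->; lia.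
have Hm : size p < size c by lia.
exists (nth 0 c (size p)).
  by rewrite mem_iota /= add0n ltnS H3 // leqnn Hm.
apply/IH; rewrite size_rcons; split.
- lia.
- by rewrite (take_nth 0 Hm) H2.
- by move=> i /andP [a b]; apply: H3; rewrite b andbT; lia.
Qed.

Lemma size_comp d p : size (comp d p) = \prod_(size p <= i < size p + d) i.+1.
Proof.
elim: d p => [|d IH] p; first by rewrite addn0 big_geq.
rewrite [comp _.+1 _]/comp -/comp size_flatten /shape -map_comp sumnE big_map.
under eq_bigr do rewrite /= IH size_rcons.
rewrite big_const_seq count_predT size_iota iter_addn_0 mulnC addnS [RHS]big_ltn.
  by rewrite addSn.
by rewrite ltnS leq_addr.
Qed.

Lemma comp_rcons d q v c : c \in comp d (rcons q v) ->
  [/\ size q < size c, take (size q).+1 c = rcons q v, nth 0 c (size q) = v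
    & drop (size q) c = v :: drop (size q).+1 c].
Proof.
case/comp_memP => H1 H2 _; rewrite size_rcons in H1 H2.
have Hs : size q < size c by rewrite H1 addSn ltnS leq_addr.
have Hn : nth 0 c (size q) = v.
  by rewrite -(nth_take 0 (ltnSn _)) H2 nth_rcons ltnn eqxx.
by split=> //; rewrite (drop_nth 0 Hs) Hn.
Qed.

Lemma Zcnt d q : \sum_(c <- comp d q) (all (fun x => x != 0) (drop (size q) c) : nat)
  = \prod_(size q <= i < size q + d) i.
Proof.
elim: d q => [|d IH] q.
  by rewrite /= big_seq1 drop_size /= addn0 big_geq.
rewrite [comp _.+1 _]/comp -/comp big_flatten big_map.
have E : forall v, v \in iota 0 (size q).+1 ->
  \sum_(c <- comp d (rcons q v)) (all (fun x => x != 0) (drop (size q) c) : nat)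
  = (v != 0) * \prod_((size q).+1 <= i < (size q).+1 + d) i.
  move=> v _; rewrite -(size_rcons q v) -IH big_distrr /= big_seq [RHS]big_seq.
  apply: eq_bigr => c /comp_rcons [_ _ _ ->].
  by rewrite size_rcons /= mulnb.
rewrite big_seq (eq_bigr _ E) -big_seq /= big_cons /= mul0n add0n.
rewrite big_seq (eq_bigr (fun _ => \prod_((size q).+1 <= i < (size q).+1 + d) i)).
  rewrite -big_seq big_const_seq count_predT size_iota iter_addn_0 mulnC.
  by rewrite addnS [RHS]big_ltn ?ltnS ?leq_addr // addSn.
by move=> v; rewrite mem_iota => /andP [H _]; rewrite -lt0n H mul1n.
Qed.

Fixpoint wf (r : rule) (d m : nat) (c : seq nat) : bool :=
  if d is d'.+1 then
    (if r m.+1 (take m.+1 c) then (nth 0 c m == 0) && all (fun x => x != 0) (drop m.+1 c)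
     else wf r d' m.+1 c)
  else false.

Definition cnt r d p := \sum_(c <- comp d p) (wf r d (size p) c : nat).

Lemma cntS r d p : cnt r d.+1 p =
  \sum_(v <- iota 0 (size p).+1)
     (if r (size p).+1 (rcons p v)
      then (v == 0) * \prod_((size p).+1 <= i < (size p).+1 + d) i
      else cnt r d (rcons p v)).
Proof.
rewrite /cnt [comp _.+1 _]/comp -/comp big_flatten big_map.
apply: eq_bigr => v _.
case E: (r (size p).+1 (rcons p v)).
  rewrite -(size_rcons p v) -Zcnt big_distrr /= big_seq [RHS]big_seq.
  apply: eq_bigr => c Hc; have [_ Ht Hn Hd] := comp_rcons Hc.
  by rewrite /= Ht E Hn size_rcons mulnb.
rewrite big_seq [RHS]big_seq size_rcons.
apply: eq_bigr => c Hc; have [_ Ht Hn Hd] := comp_rcons Hc.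
by rewrite /= Ht E.
Qed.

Definition code n (s : 'S_n) : seq nat := map (relrank s) (enum 'I_n).

Lemma size_code n (s : 'S_n) : size (code s) = n.
Proof. by rewrite /code size_map size_enum_ord. Qed.

Lemma nth_code n (s : 'S_n) (j : 'I_n) : nth 0 (code s) j = relrank s j.
Proof. by rewrite /code (nth_map j) ?size_enum_ord // nth_ord_enum. Qed.

Lemma relrankE n (s : 'S_n) j : relrank s j = #|[set i : 'I_n | (i < j) && (s i < s j)]|.
Proof. apply: eq_card => i; rewrite inE; apply/idP/idP; rewrite in_setE //. Qed.

Lemma relrank_le n (s : 'S_n) (j : 'I_n) : relrank s j <= j.
Proof.
rewrite relrankE.
have Hj : j <= n by apply: ltnW.
have S : [set i : 'I_n | (i < j) && (s i < s j)] \subset [set widen_ord Hj k | k : 'I_j].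
  apply/fintype.subsetP => i; rewrite inE => /andP [H _].
  by apply/imsetP; exists (Ordinal H) => //; apply: val_inj.
apply: (leq_trans (subset_leq_card S)).
by rewrite (leq_trans (leq_imset_card _ _)) // card_ord.
Qed.

Lemma code_comp n (s : 'S_n) : code s \in comp n [::].
Proof.
apply/comp_memP; split => //=; [by rewrite size_code | by rewrite take0 |].
move=> i; rewrite size_code => Hi.
by rewrite -[i]/(nat_of_ord (Ordinal Hi)) nth_code relrank_le.
Qed.

Lemma obs_code n (s : 'S_n) k : obs s k = take k (code s).
Proof.
rewrite /obs /code -map_take; congr map.
apply: (inj_map val_inj); rewrite map_take val_enum_ord take_iota.
rewrite (_ : map val (filter (fun i : 'I_n => i < k) (enum 'I_n)) = filter (fun i => i < k) (map val (enum 'I_n))); last by rewrite filter_map.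
rewrite val_enum_ord -(filter_iota_ltn 0 (geq_minr k n)) add0n.
apply: eq_in_filter => i; rewrite mem_iota add0n => /andP [_ Hi] /=.
by rewrite leq_min Hi andbT.
Qed.

Lemma relrank_gt0P n (s : 'S_n) (j : 'I_n) :
  reflect (exists i : 'I_n, (i < j) && (s i < s j)) (0 < relrank s j).
Proof.
rewrite relrankE; apply: (iffP card_gt0P) => [[i]|[i Hi]].
  by rewrite inE => Hi; exists i.
by exists i; rewrite inE.
Qed.

Lemma best_code n (s : 'S_n) (j : 'I_n) :
  (val (s j) == 0) = (relrank s j == 0) && [forall i : 'I_n, (j < i) ==> (relrank s i != 0)].
Proof.
apply/idP/idP.
  move=> /eqP H0; have H0' : nat_of_ord (s j) = 0 := H0; apply/andP; split.
    rewrite eqn0Ngt; apply/negP => /relrank_gt0P [i /andP [_]]; lia.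
  apply/forallP => i; apply/implyP => Hji; rewrite -lt0n.
  apply/relrank_gt0P; exists j; rewrite Hji /=.
  have : s i != s j by rewrite (inj_eq perm_inj); apply/eqP => E; move: Hji; rewrite E ltnn.
  move/eqP => Hne; rewrite H0' lt0n; apply/eqP => E; apply: Hne; apply: val_inj; by rewrite /= E H0'.
case/andP => H1 /forallP H2.
have n0 : 0 < n by apply: (leq_ltn_trans (leq0n j) (ltn_ord j)).
set z : 'I_n := Ordinal n0.
set i0 := ((s^-1)%g z).
have Hi0 : s i0 = z by rewrite permKV.
case: (ltngtP i0 j) => H.
- move: H1; rewrite eqn0Ngt => /negP []; apply/relrank_gt0P; exists i0.
  rewrite H Hi0 /= lt0n; apply/negP => /eqP E.
  have : s j = z by apply: val_inj.
  by rewrite -Hi0 => /perm_inj E2; move: H; rewrite E2 ltnn.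
- move: (H2 i0); rewrite H /= -lt0n => /relrank_gt0P [i /andP [_]].
  by rewrite Hi0.
- have -> : j = i0 by apply: val_inj.
  by rewrite Hi0.
Qed.

Lemma relrank_lt n (s t : 'S_n) (j : 'I_n) :
  (forall i : 'I_n, j < i -> t i = s i) -> s j < t j -> relrank s j < relrank t j.
Proof.
move=> Heq Hlt; rewrite !relrankE.
set A := [set i : 'I_n | (i < j) && (s i < s j)].
set B := [set i : 'I_n | (i < j) && (t i < t j)].
pose f := fun i => (t^-1)%g (s i).
have Ht : forall i, t (f i) = s i by move=> i; rewrite /f permKV.
have f_inj : injective f by move=> a b; rewrite /f => /perm_inj /perm_inj.
have Hafter : forall k m : 'I_n, t k = s m -> j < k -> k = m.
  by move=> k m E Hk; apply: (@perm_inj _ s); rewrite -Heq.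
have i0B : f j \in B.
  rewrite inE Ht Hlt andbT.
  case: (ltngtP (f j) j) => // H.
    by have := Hafter _ _ (Ht j) H => E; move: H; rewrite E ltnn.
  have E : f j = j by apply: val_inj.
  by move: (Ht j); rewrite E => E2; move: Hlt; rewrite E2 ltnn.
have S : f @: A \subset B :\ f j.
  apply/fintype.subsetP => x /imsetP [i]; rewrite inE => /andP [Hi1 Hi2] ->.
  rewrite !inE (inj_eq f_inj) Ht.
  have Hij : i != j by apply/eqP => E; move: Hi1; rewrite E ltnn.
  rewrite Hij /= (ltn_trans Hi2 Hlt) andbT.
  case: (ltngtP (f i) j) => // H.
    by have := Hafter _ _ (Ht i) H => E; move: H; rewrite E => H; move: (ltn_trans H Hi1); rewrite ltnn.
  have E : f i = j by apply: val_inj.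
  by move: (Ht i); rewrite E => E2; move: (ltn_trans Hi2 Hlt); rewrite E2 ltnn.
have := subset_leq_card S; rewrite card_imset // => H.
by rewrite (cardsD1 (f j) B) i0B add1n ltnS.
Qed.

Lemma code_inj n : injective (@code n).
Proof.
move=> s t E.
have Hr : forall j, relrank s j = relrank t j by move=> j; rewrite -!nth_code E.
suff H : forall d (j : 'I_n), n <= j + d -> s j = t j.
  by apply/permP => j; apply: (H n); rewrite leq_addl.
elim=> [|d IH] j Hj; first by move: (ltn_ord j) Hj; lia.
case: (leqP n (j + d)) => Hjd; first exact: IH.
have Hafter : forall i : 'I_n, j < i -> s i = t i.
  by move=> i Hi; apply: IH; lia.
case: (ltngtP (s j) (t j)) => H.
- by have := relrank_lt (fun i Hi => esym (Hafter i Hi)) H; rewrite Hr ltnn.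
- by have := relrank_lt Hafter H; rewrite Hr ltnn.
- exact: val_inj.
Qed.

Lemma all_drop_code n (s : 'S_n) (j : 'I_n) :
  all (fun x => x != 0) (drop j.+1 (code s)) =
  [forall i : 'I_n, (j < i) ==> (relrank s i != 0)].
Proof.
apply/(all_nthP 0)/forallP => [H i|H k].
  apply/implyP => Hji.
  have := H (i - j.+1); rewrite size_drop size_code nth_drop subnKC // -nth_code.
  by apply; move: (ltn_ord i); lia.
rewrite size_drop size_code nth_drop => Hk.
have Hi : j.+1 + k < n by lia.
have := H (Ordinal Hi); rewrite -nth_code /= => /implyP; apply; lia.
Qed.

Lemma wf_code n r (s : 'S_n) d m : m + d = n ->
  wf r d m (code s) = [exists j : 'I_n, [&& m <= j, r j.+1 (obs s j.+1),
     [forall i : 'I_n, (m <= i < j) ==> ~~ r i.+1 (obs s i.+1)] & val (s j) == 0]].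
Proof.
elim: d m => [|d IH] m Hmd.
  rewrite addn0 in Hmd; subst m; apply/esym/existsP => [[j /and4P [H _ _ _]]].
  by move: (ltn_ord j); rewrite ltnNge H.
have Hm : m < n by lia.
pose jm : 'I_n := Ordinal Hm.
rewrite /= -obs_code.
case E: (r m.+1 (obs s m.+1)).
  rewrite -[m]/(nat_of_ord jm) nth_code all_drop_code -best_code.
  apply/idP/existsP => [H|[j /and4P [H1 H2 /forallP H3 H4]]].
    exists jm; rewrite leqnn /= E H andbT; apply/forallP => i; apply/implyP; lia.
  case: (ltngtP m j) => Hj.
  - by have := H3 jm; rewrite /= Hj leqnn E.
  - by move: H1; rewrite leqNgt Hj.
  - by have -> : jm = j by apply: val_inj.
rewrite IH; last by lia.
apply/existsP/existsP => [[j /and4P [H1 H2 /forallP H3 H4]]|[j /and4P [H1 H2 /forallP H3 H4]]].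
  exists j; rewrite H2 H4 ltnW //= andbT; apply/forallP => i; apply/implyP => /andP [Hi1 Hi2].
  case: (ltngtP m i) => Hmi.
  - by have := H3 i; rewrite Hmi Hi2 => /implyP; apply.
  - by move: Hi1; rewrite leqNgt Hmi.
  - by rewrite -Hmi E.
have Hmj : m < j.
  rewrite ltn_neqAle H1 andbT; apply/eqP => Emj; move: H2; rewrite -Emj E.
  done.
exists j; rewrite Hmj H2 H4 /= andbT; apply/forallP => i; apply/implyP => /andP [Hi1 Hi2].
by have := H3 i; rewrite Hi2 ltnW //= andbT => /implyP; apply.
Qed.

Lemma wins_code n r (s : 'S_n) : wins r s = wf r n 0 (code s).
Proof. by rewrite wf_code. Qed.

Lemma card_wins n r : #|[set s : 'S_n | wins r s]| = cnt r n [::].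
Proof.
have Hperm : perm_eq (map (@code n) (enum 'S_n)) (comp n [::]).
  have U1 : uniq (map (@code n) (enum 'S_n)) by rewrite (map_inj_uniq (@code_inj n)) enum_uniq.
  have Sub : {subset map (@code n) (enum 'S_n) <= comp n [::]}.
    by move=> c /mapP [s _ ->]; apply: code_comp.
  have Hsz : size (comp n [::]) <= size (map (@code n) (enum 'S_n)).
    rewrite size_comp size_map -cardE card_Sn /= add0n fact_prod big_add1.
    by [].
  have [Hsz2 Heq] := uniq_min_size U1 Sub Hsz.
  apply: uniq_perm => //; exact: leq_size_uniq U1 Sub Hsz.
rewrite /cnt /= -(perm_big _ Hperm) big_map.
have -> : #|[set s : 'S_n | wins r s]| = #|[pred s : 'S_n | wins r s]|.
  by apply: eq_card => s; rewrite !inE.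
rewrite -sum1_card big_mkcond /= -big_enum /=.
by apply: eq_bigr => s _; rewrite inE /= wins_code; case: (wf r n 0 (code s)).
Qed.

Local Open Scope ring_scope.

Definition Hs (R : realType) (a b : nat) : R := \sum_(a <= j < b) (j%:R)^-1.
Definition q (R : realType) (n m : nat) : R :=
  if m == 0%N then (n%:R)^-1 else m%:R / n%:R * Hs R m n.

Lemma Hs_ltn (R : realType) a b : (a < b)%N -> Hs R a b = (a%:R)^-1 + Hs R a.+1 b.
Proof. by move=> H; rewrite /Hs big_ltn. Qed.

Lemma Hs_geq (R : realType) a b : (b <= a)%N -> Hs R a b = 0.
Proof. by move=> H; rewrite /Hs big_geq. Qed.

Lemma Hs_recr (R : realType) a b : (a <= b)%N -> Hs R a b.+1 = Hs R a b + (b%:R)^-1.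
Proof. by move=> H; rewrite /Hs big_nat_recr. Qed.

Lemma Hs_ge0 (R : realType) a b : 0 <= Hs R a b.
Proof. by rewrite /Hs; apply: sumr_ge0 => i _; rewrite invr_ge0 ler0n. Qed.

Lemma Hs_mono (R : realType) a a' b : (a <= a')%N -> Hs R a' b <= Hs R a b.
Proof.
move=> H; case: (leqP b a') => Hb; first by rewrite (Hs_geq _ Hb) Hs_ge0.
rewrite /Hs (big_cat_nat H (ltnW Hb)) /= lerDr.
by apply: sumr_ge0 => i _; rewrite invr_ge0 ler0n.
Qed.

Lemma q_n (R : realType) n : q R n n = 0.
Proof. by rewrite /q; case: eqP => [->|_]; rewrite ?invr0 // Hs_geq // mulr0. Qed.

Lemma Qstep (R : realType) n j : (j < n)%N ->
  q R n j.+1 - q R n j = (Hs R j.+1 n - 1) / n%:R.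
Proof.
move=> Hj; rewrite /q /=; case: eqP => [->|/eqP Hj0].
  by rewrite mul1r mulrBl mul1r mulrC.
rewrite (Hs_ltn _ Hj) -[j.+1]addn1 natrD.
have Hn : (n%:R : R) != 0 by rewrite pnatr_eq0 -lt0n (leq_ltn_trans _ Hj).
have Hj' : (j%:R : R) != 0 by rewrite pnatr_eq0.
field; by rewrite Hn Hj'.
Qed.

Lemma Qrec (R : realType) n m : (m < n)%N ->
  q R n m = (n%:R)^-1 + m%:R / (m.+1)%:R * q R n m.+1.
Proof.
move=> Hm; rewrite {1}/q /=; case: eqP => [->|/eqP Hm0]; first by rewrite /= !mul0r addr0.
rewrite /q /= (Hs_ltn _ Hm).
have Hn : (n%:R : R) != 0 by rewrite pnatr_eq0 -lt0n (leq_ltn_trans _ Hm).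
have Hm' : (m%:R : R) != 0 by rewrite pnatr_eq0.
have Hm1 : (1 + m%:R : R) != 0 by rewrite addrC natr1 pnatr_eq0.
field; by rewrite Hn Hm' Hm1.
Qed.

Lemma q_ge0 (R : realType) n m : 0 <= q R n m.
Proof.
rewrite /q; case: eqP => _; first by rewrite invr_ge0 ler0n.
by rewrite mulr_ge0 ?Hs_ge0 // divr_ge0 ?ler0n.
Qed.

Lemma q_dec (R : realType) n k : (Hs R k.+1 n <= 1) ->
  forall j, (k <= j <= n)%N -> q R n j <= q R n k.
Proof.
move=> Hk j /andP [H1 H2]; elim: j H1 H2 => [|j IH] H1 H2.
  by rewrite leqn0 in H1; rewrite (eqP H1).
case: (leqP j.+1 k) => Hjk.
  by have -> : j.+1 = k by apply/eqP; rewrite eqn_leq Hjk H1.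
apply: (le_trans _ (IH Hjk (ltnW H2))).
rewrite -subr_le0 (Qstep _ H2) mulr_le0_ge0 ?invr_ge0 ?ler0n // subr_le0.
by apply: le_trans Hk; apply: Hs_mono.
Qed.

Lemma q_sdec (R : realType) n k : (Hs R k.+1 n < 1) ->
  forall j, (k < j <= n)%N -> q R n j < q R n k.
Proof.
move=> Hk j /andP [H1 H2]; elim: j H1 H2 => [|j IH] H1 H2; first by [].
have Hneg : q R n j.+1 - q R n j < 0.
  rewrite (Qstep _ H2) pmulr_llt0 ?invr_gt0 ?ltr0n ?(leq_ltn_trans _ H2) // subr_lt0.
  by apply: le_lt_trans Hk; apply: Hs_mono.
rewrite subr_lt0 in Hneg.
case: (leqP j.+1 k.+1) => Hjk.
  by have <- : j = k by apply/eqP; rewrite eqn_leq -ltnS Hjk -ltnS H1.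
by apply: (lt_trans Hneg); apply: IH => //; apply: ltnW.
Qed.

Definition Nn (n m : nat) : nat := \prod_(m <= i < n) i.+1.
Definition Pm (n m : nat) : nat := \prod_(m.+1 <= i < n) i.

Lemma N_rec n m : (m < n)%N -> Nn n m = (m.+1 * Nn n m.+1)%N.
Proof. by move=> H; rewrite /Nn big_ltn. Qed.

Lemma N_n n : Nn n n = 1%N.
Proof. by rewrite /Nn big_geq. Qed.

Lemma N_0 n : Nn n 0 = n`!.
Proof. by rewrite /Nn fact_prod big_add1. Qed.

Lemma N_gt0 n m : (0 < Nn n m)%N.
Proof. by rewrite /Nn prodn_gt0. Qed.

Lemma P_N n m : (m < n)%N -> (Pm n m * n)%N = Nn n m.
Proof.
move=> H; rewrite /Pm /Nn big_add1 /=; case: n H => [//|n] H /=.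
by rewrite big_nat_recr.
Qed.

Fixpoint wfix (R : realType) (n d : nat) : R :=
  if d is d'.+1 then Order.max (q R n (n - d)) (wfix R n d') else 0.
Definition w (R : realType) (n m : nat) : R := wfix R n (n - m).

Lemma w_rec (R : realType) n m : (m < n)%N -> w R n m = Order.max (q R n m) (w R n m.+1).
Proof.
move=> H; rewrite /w -(subnSK H) /= (subnSK H) subKn //; exact: ltnW.
Qed.

Lemma w_n (R : realType) n : w R n n = 0.
Proof. by rewrite /w subnn. Qed.

Lemma w_ub (R : realType) n m k : (m <= k <= n)%N -> q R n k <= w R n m.
Proof.
move=> /andP [H1 H2].
have [d Hd] : exists d, (n - m)%N = d by eexists.
elim: d m Hd H1 => [|d IH] m Hd H1.
  have Em : m = n by apply/eqP; rewrite eqn_leq (leq_trans H1 H2) -subn_eq0 Hd.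
  have Ek : k = n by apply/eqP; rewrite eqn_leq H2 -Em H1.
  by rewrite Ek q_n Em w_n.
have Hm : (m < n)%N by rewrite -subn_gt0 Hd.
rewrite w_rec //; case: (ltngtP m k) => Hk.
- by rewrite le_max IH ?orbT //; lia.
- by move: H1; rewrite leqNgt Hk.
- by rewrite Hk le_max lexx.
Qed.

Lemma w_attained (R : realType) n m : (m <= n)%N ->
  exists k, (m <= k <= n)%N /\ w R n m = q R n k.
Proof.
have [d Hd] : exists d, (n - m)%N = d by eexists.
elim: d m Hd => [|d IH] m Hd H1.
  have Em : m = n by apply/eqP; rewrite eqn_leq H1 -subn_eq0 Hd.
  by exists n; rewrite Em w_n q_n leqnn.
have Hm : (m < n)%N by rewrite -subn_gt0 Hd.
have [k [Hk Ek]] := IH m.+1 (ltac:(lia)) Hm.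
rewrite w_rec //; case: (leP (q R n m) (w R n m.+1)) => Hle.
  by exists k; rewrite Ek; split => //; lia.
by exists m; rewrite leqnn H1.
Qed.

Lemma sum_iota_le (R : realType) (F : nat -> R) B m :
  (forall v, (0 < v)%N -> F v <= B) ->
  \sum_(v <- iota 0 m.+1) F v <= F 0%N + m%:R * B.
Proof.
move=> H; rewrite /= big_cons lerD2l.
apply: (le_trans (y := \sum_(v <- iota 1 m) B)).
  rewrite big_seq [X in _ <= X]big_seq; apply: ler_sum => v.
  by rewrite mem_iota => /andP [Hv _]; apply: H.
by rewrite big_const_seq count_predT size_iota iter_addr_0 mulr_natl.
Qed.

Lemma sum_iota_eq (R : realType) (F : nat -> R) B m :
  (forall v, (0 < v)%N -> F v = B) ->
  \sum_(v <- iota 0 m.+1) F v = F 0%N + m%:R * B.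
Proof.
move=> H; rewrite /= big_cons; congr (_ + _).
rewrite big_seq (eq_bigr (fun _ => B)); last first.
  by move=> v; rewrite mem_iota => /andP [Hv _]; apply: H.
by rewrite -big_seq big_const_seq count_predT size_iota iter_addr_0 mulr_natl.
Qed.

Lemma w_ge0 (R : realType) n m : (m <= n)%N -> 0 <= w R n m.
Proof. by move=> H; rewrite -(q_n R n); apply: w_ub; rewrite H leqnn. Qed.

Lemma key (R : realType) n m : (m < n)%N ->
  Order.max ((m.+1)%:R / n%:R) (w R n m.+1) + m%:R * w R n m.+1 <= (m.+1)%:R * w R n m.
Proof.
move=> Hm; rewrite (w_rec _ Hm).
have Hn : (0 < n%:R :> R) by rewrite ltr0n (leq_ltn_trans _ Hm).
set w' := w R n m.+1.
case: (leP ((m.+1)%:R / n%:R) w') => Hc.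
  rewrite -[X in X + _]mul1r -mulrDl -natr1 addrC ler_wpM2l ?addr_ge0 ?ler0n //.
  by rewrite le_max lexx orbT.
have Hq1 : q R n m.+1 <= w' by apply: w_ub; rewrite leqnn Hm.
have HH : Hs R m.+1 n <= 1.
  rewrite leNgt; apply/negP => HH.
  have : (m.+1)%:R / n%:R < q R n m.+1.
    by rewrite /q /= -[X in X < _]mulr1 ltr_pM2l // divr_gt0.
  by move=> H2; move: (lt_trans H2 (le_lt_trans Hq1 Hc)); rewrite ltxx.
have Ew : w' = q R n m.+1.
  apply/eqP; rewrite eq_le Hq1 andbT.
  have [k [Hk Ek]] := w_attained R (n := n) (m := m.+1) Hm.
  rewrite /w' Ek; apply: q_dec => //.
  by apply: le_trans HH; apply: Hs_mono.
rewrite Ew (Qrec _ Hm).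
have -> : (m.+1)%:R / n%:R + m%:R * q R n m.+1 = (m.+1)%:R * ((n%:R)^-1 + m%:R / (m.+1)%:R * q R n m.+1).
  by field; rewrite addrC natr1 pnatr_eq0 (gt_eqF Hn).
by rewrite ler_wpM2l ?ler0n // le_max lexx.
Qed.

Lemma P_real (R : realType) n m : (m < n)%N ->
  (Pm n m)%:R = (Nn n m.+1)%:R * ((m.+1)%:R / n%:R) :> R.
Proof.
move=> Hm.
have Hn : (n%:R : R) != 0 by rewrite pnatr_eq0 -lt0n (leq_ltn_trans _ Hm).
have E : ((Pm n m)%:R * n%:R : R) = (m.+1)%:R * (Nn n m.+1)%:R.
  by rewrite -!natrM P_N // N_rec.
apply: (mulIf Hn); rewrite E; by field.
Qed.

Lemma cnt_bound (R : realType) n r d p : (size p + d)%N = n ->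
  (cnt r d p)%:R <= (Nn n (size p))%:R * w R n (size p) :> R.
Proof.
elim: d p => [|d IH] p Hpd.
  by rewrite /cnt /= big_seq1 /=; rewrite addn0 in Hpd; rewrite Hpd w_n mulr0.
set m := size p.
have Hm : (m < n)%N by rewrite -Hpd /m addnS ltnS leq_addr.
rewrite cntS -/m natr_sum.
have Hx : (0 : R) < (Nn n m.+1)%:R by rewrite ltr0n N_gt0.
have IH' : forall v, (cnt r d (rcons p v))%:R <= (Nn n m.+1)%:R * w R n m.+1 :> R.
  by move=> v; have := IH (rcons p v); rewrite size_rcons; apply; rewrite -Hpd addSnnS.
have Hd : (m.+1 + d)%N = n by rewrite -Hpd addSnnS.
eapply le_trans; first (apply: (sum_iota_le (B := (Nn n m.+1)%:R * w R n m.+1))).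
  move=> v Hv /=; case: ifP => _; last exact: IH'.
  by rewrite eqn0Ngt Hv mul0n; apply: mulr_ge0; [exact: ltW | exact: w_ge0].
apply: (le_trans (y := (Nn n m.+1)%:R * (Order.max ((m.+1)%:R / n%:R) (w R n m.+1)
          + m%:R * w R n m.+1))).
  rewrite mulrDr mulrCA lerD2r; case: ifP => _.
    rewrite mul1n Hd -/(Pm n m) (P_real _ Hm).
    by rewrite ler_pM2l // le_max lexx.
  by apply: (le_trans (IH' 0%N)); rewrite ler_pM2l // le_max lexx orbT.
rewrite (N_rec Hm) natrM -mulrA [X in _ <= X]mulrCA ler_pM2l //.
exact: key.
Qed.

Lemma cnt_thr (R : realType) n k0 d p : (k0 < n)%N -> (size p + d)%N = n ->
  (cnt (thr n k0.+1) d p)%:R = (Nn n (size p))%:R * q R n (maxn (size p) k0) :> R.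
Proof.
move=> Hk0; elim: d p => [|d IH] p Hpd.
  rewrite /cnt /= big_seq1 /=; rewrite addn0 in Hpd.
  by rewrite Hpd (maxn_idPl (ltnW Hk0)) q_n mulr0.
set m := size p.
have Hm : (m < n)%N by rewrite -Hpd /m addnS ltnS leq_addr.
have Hd : (m.+1 + d)%N = n by rewrite -Hpd addSnnS.
have IH' : forall v, (cnt (thr n k0.+1) d (rcons p v))%:R =
    (Nn n m.+1)%:R * q R n (maxn m.+1 k0) :> R.
  by move=> v; have := IH (rcons p v); rewrite size_rcons; apply.
rewrite cntS -/m natr_sum /thr.
under eq_bigr do rewrite last_rcons.
case: (eqVneq m.+1 n) => Emn.
  rewrite (sum_iota_eq (B := 0)); last by move=> v Hv; rewrite orbT eqn0Ngt Hv mul0n.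
  rewrite orbT mul1n mulr0 addr0 Hd -/(Pm n m) (P_real _ Hm) -Emn N_n mul1r.
  have Hmk : maxn m k0 = m by apply/maxn_idPl; rewrite -ltnS Emn.
  rewrite Hmk (N_rec (ltnSn m)) N_n muln1 (Qrec _ (ltnSn m)) q_n mulr0 addr0.
  by rewrite divff // pnatr_eq0.
under eq_bigr do rewrite orbF.
case: (leqP k0 m) => Hkm.
  rewrite (sum_iota_eq (B := (Nn n m.+1)%:R * q R n m.+1)); last first.
    move=> v Hv; rewrite ltnS Hkm /= eqn0Ngt Hv /= IH'.
    by rewrite (maxn_idPl (leq_trans Hkm (leqnSn m))).
  rewrite ltnS Hkm eqxx /= mul1n Hd -/(Pm n m) (P_real _ Hm).
  rewrite (N_rec Hm) natrM (Qrec _ Hm).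
  have Hn : (n%:R : R) != 0 by rewrite pnatr_eq0 -lt0n (leq_ltn_trans _ Hm).
  by field; rewrite addrC natr1 pnatr_eq0 Hn.
rewrite (sum_iota_eq (B := (Nn n m.+1)%:R * q R n k0)); last first.
  by move=> v Hv; rewrite ltnS leqNgt Hkm /= IH' (maxn_idPr Hkm).
rewrite ltnS leqNgt Hkm /= IH' (maxn_idPr Hkm).
rewrite (N_rec Hm) natrM -natr1; ring.
Qed.

Lemma dvd2S v k : ~~ odd k -> (2 ^ v.+1 %| k * 2 ^ v)%N.
Proof. by move=> Hk; rewrite expnS dvdn_pmul2r ?expn_gt0 // dvdn2. Qed.

Lemma uniq_mult a b : (0 < a)%N -> (a.+1 < b)%N ->
  exists v j, [/\ (0 < v)%N, (a <= j < b)%N, (2 ^ v %| j)%N &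
    forall i, (a <= i < b)%N -> (2 ^ v %| i)%N -> i = j].
Proof.
move=> Ha Hab.
pose P := fun v => has (fun j => 2 ^ v %| j)%N (iota a (b - a)).
have PP : forall v, reflect (exists j, (a <= j < b)%N /\ (2 ^ v %| j)%N) (P v).
  move=> v; apply: (iffP hasP) => [[j Hj Hd]|[j [Hj Hd]]]; exists j => //.
    by move: Hj; rewrite mem_iota subnKC // ltnW // ltnW.
  by rewrite mem_iota subnKC // ltnW // ltnW.
have exP : exists v, P v by exists 0%N; apply/PP; exists a; rewrite leqnn dvd1n; split=> //; lia.
have ubP : forall v, P v -> (v <= b)%N.
  move=> v /PP [j [/andP [H1 H2] Hd]].
  have := dvdn_leq (leq_trans Ha H1) Hd => H3.
  by apply: ltnW; apply: leq_trans (ltn_expl v (ltnSn 1)) (leq_trans H3 (ltnW H2)).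
case: (ex_maxnP exP ubP) => v /PP [j [Hj Hdj]] maxv.
have P1 : P 1%N.
  apply/PP; exists (if odd a then a.+1 else a); case: ifP => Hodd.
    by rewrite dvdn2 /= Hodd; split=> //; lia.
  by rewrite dvdn2 Hodd; split=> //; lia.
have Hv : (0 < v)%N by apply: maxv P1.
have key2 : forall x y, (a <= x < b)%N -> (a <= y < b)%N -> (2 ^ v %| x)%N -> (2 ^ v %| y)%N ->
    (x < y)%N -> False.
  move=> x y Hx Hy /dvdnP [x' Ex] /dvdnP [y' Ey] Hxy.
  have Hx'y' : (x' < y')%N by rewrite -(ltn_pmul2r (expn_gt0 2 v)) -Ex -Ey.
  suff : P v.+1 by move/maxv; rewrite ltnn.
  apply/PP; case Ho: (odd x').
    exists ((x'.+1) * 2 ^ v)%N; rewrite dvd2S /= ?Ho //; split=> //.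
    have : (x'.+1 * 2 ^ v <= y' * 2 ^ v)%N by rewrite leq_pmul2r ?expn_gt0.
    rewrite -Ey => Hle; apply/andP; split; last by apply: leq_ltn_trans Hle _; case/andP: Hy.
    by rewrite mulSnr; apply: leq_trans (leq_addr _ _); rewrite -Ex; case/andP: Hx.
  by exists x; rewrite Ex dvd2S ?Ho //; split=> //; rewrite -Ex.
exists v, j; split=> // i Hi Hdi.
case: (ltngtP i j) => Hij //.
- by have := key2 _ _ Hi Hj Hdi Hdj Hij.
- by have := key2 _ _ Hj Hi Hdj Hdi Hij.
Qed.

Lemma nonint_nat a b : (2 <= a)%N -> (a.+1 < b)%N ->
  (\sum_(a <= j < b) \prod_(a <= i < b | i != j) i != \prod_(a <= i < b) i)%N.
Proof.
move=> Ha Hab.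
have [v [j [Hv Hj Hdj Hu]]] := uniq_mult (ltnW Ha) Hab.
set L := (\prod_(a <= i < b) i)%N.
pose T i := (\prod_(a <= k < b | k != i) k)%N.
have LT : forall i, (a <= i < b)%N -> L = (i * T i)%N.
  by move=> i Hi; rewrite /L (bigD1_seq i) ?mem_index_iota ?iota_uniq.
have Lpos : (0 < L)%N.
  rewrite /L big_seq; apply: prodn_cond_gt0 => i; rewrite mem_index_iota; lia.
have Tpos : forall i, (a <= i < b)%N -> (0 < T i)%N.
  by move=> i Hi; move: Lpos; rewrite (LT i Hi) muln_gt0 => /andP [].
set e := logn 2 L.
have logT : forall i, (a <= i < b)%N -> e = (logn 2 i + logn 2 (T i))%N.
  move=> i Hi; rewrite /e (LT i Hi) lognM //; [lia | exact: Tpos].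
have Hvj : (v <= logn 2 j)%N by rewrite -pfactor_dvdn //; lia.
have Hej := logT j Hj.
have KL : (2 ^ (e - v + 1) %| L)%N by rewrite pfactor_dvdn //; lia.
have KT : forall i, (a <= i < b)%N -> i != j -> (2 ^ (e - v + 1) %| T i)%N.
  move=> i Hi Hij; rewrite pfactor_dvdn ?Tpos //.
  have Hli : (logn 2 i < v)%N.
    rewrite ltnNge -pfactor_dvdn //; last by lia.
    by apply/negP => Hd; move: Hij; rewrite (Hu i Hi Hd) eqxx.
  have := logT i Hi; lia.
have nKTj : ~~ (2 ^ (e - v + 1) %| T j)%N.
  by rewrite pfactor_dvdn ?Tpos //; lia.
apply/negP => /eqP Hsum.
move: KL; rewrite -Hsum (bigD1_seq j) ?mem_index_iota ?iota_uniq //= dvdn_addl.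
  by move=> H; move: nKTj; rewrite H.
rewrite big_seq_cond; apply: dvdn_sum => i /andP [Hi Hij].
by apply: KT => //; rewrite -mem_index_iota.
Qed.

Lemma nonint (R : realType) a b : (2 <= a)%N -> Hs R a b != 1.
Proof.
move=> Ha.
case: (leqP b a) => Hb; first by rewrite Hs_geq // eq_sym oner_eq0.
case: (eqVneq b a.+1) => Eb.
  rewrite Eb (Hs_ltn _ (ltnSn a)) Hs_geq // addr0.
  apply/eqP => E.
  have : (a%:R : R) = 1 by rewrite -[a%:R]invrK E invr1.
  by move/eqP; rewrite pnatr_eq1; lia.
have Hab : (a.+1 < b)%N by lia.
apply/eqP => E.
have := nonint_nat Ha Hab; rewrite -(eqr_nat R) => /eqP; apply.
set L := (\prod_(a <= i < b) i)%N.
have -> : (L%:R : R) = L%:R * Hs R a b by rewrite E mulr1.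
rewrite /Hs mulr_sumr natr_sum big_seq [RHS]big_seq.
apply: eq_bigr => i; rewrite mem_index_iota => Hi.
have Hi0 : (i%:R : R) != 0 by rewrite pnatr_eq0; lia.
by rewrite /L (bigD1_seq i) ?mem_index_iota ?iota_uniq //= natrM mulrC mulrA mulVf // mul1r.
Qed.

Lemma winprobE (R : realType) n r : winprob R n r = (cnt r n [::])%:R / (n`!)%:R.
Proof.
rewrite /winprob -card_wins; congr (_%:R / _).
by apply: eq_card => s; rewrite !inE; apply/idP/idP; rewrite ?in_setE.
Qed.

Lemma fact_neq0 (R : realType) n : ((n`!)%:R : R) != 0.
Proof. by rewrite pnatr_eq0 -lt0n fact_gt0. Qed.

Lemma winprob_le (R : realType) n r : winprob R n r <= w R n 0.
Proof.
rewrite winprobE; have := cnt_bound R r (p := [::]) (d := n) (add0n n).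
rewrite /= N_0 => H.
rewrite ler_pdivrMr ?ltr0n ?fact_gt0 // mulrC //.
Qed.

Lemma winprob_thr (R : realType) n k0 : (k0 < n)%N -> winprob R n (thr n k0.+1) = q R n k0.
Proof.
move=> Hk; rewrite winprobE (cnt_thr R (p := [::]) Hk (add0n n)) /= N_0 max0n.
by rewrite mulrC mulrA mulVf ?fact_neq0 // mul1r.
Qed.

Lemma w0_pos (R : realType) n : (0 < n)%N -> 0 < w R n 0.
Proof.
move=> Hn; apply: (lt_le_trans _ (w_ub R (m := 0) (k := 0) _)); last by rewrite leqnn.
by rewrite /q /= invr_gt0 ltr0n.
Qed.

Lemma w0_att (R : realType) n : (0 < n)%N -> exists k0, (k0 < n)%N /\ w R n 0 = q R n k0.
Proof.
move=> Hn; have [k [/andP [_ Hk] Ek]] := w_attained R (leq0n n).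
case: (ltngtP k n) => Hkn.
- by exists k.
- by move: Hk; rewrite leqNgt Hkn.
- by move: (w0_pos R Hn); rewrite Ek Hkn q_n ltxx.
Qed.

Lemma V_eq (R : realType) n : (0 < n)%N -> V R n = w R n 0.
Proof.
move=> Hn; rewrite /V.
match goal with |- sup ?X = _ => set E := X end.
have ub : ubound E (w R n 0) by move=> x [r _ <-]; exact: winprob_le.
have ne : (E !=set0)%classic by exists (winprob R n (thr n 1)); exists (thr n 1).
apply/eqP; rewrite eq_le (ge_sup ne ub) /=.
have [k0 [Hk Ek]] := w0_att R Hn.
rewrite Ek -(winprob_thr R Hk); apply: (ub_le_sup (ex_intro _ _ ub)).
by exists (thr n k0.+1).
Qed.

Lemma H1gt (R : realType) n : (3 <= n)%N -> 1 < Hs R 1 n.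
Proof.
move=> Hn; rewrite /Hs (big_cat_nat (n := 3)) //= big_ltn // big_ltn // big_geq //.
have H2 : (0 : R) < 2%:R^-1 by rewrite invr_gt0 ltr0n.
have H3 : (0 : R) <= \sum_(3 <= i < n) (i%:R)^-1.
  by apply: sumr_ge0 => i _; rewrite invr_ge0 ler0n.
rewrite invr1; lra.
Qed.

Lemma Hs_ne1 (R : realType) n k : (3 <= n)%N -> (1 <= k)%N -> Hs R k n != 1.
Proof.
move=> Hn Hk; case: (ltngtP k 1) => Hk1.
- by move: Hk; rewrite leqNgt Hk1.
- by apply: nonint.
- by rewrite Hk1 gt_eqF // H1gt.
Qed.

Lemma strict (R : realType) n k : (3 <= n)%N -> (k <= n)%N -> q R n.+1 k < w R n 0.
Proof.
move=> Hn Hk.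
have Hn0 : (n%:R : R) != 0 by rewrite pnatr_eq0; lia.
have Hn1 : (n%:R + 1 : R) != 0 by rewrite natr1 pnatr_eq0.
have Hnp : (0 : R) < n%:R by rewrite ltr0n; lia.
case: k Hk => [|k] Hk.
  apply: (lt_le_trans _ (w_ub R (m := 0) (k := 0) _)); last by rewrite leq0n.
  rewrite /q /= -subr_gt0.
  have -> : (n%:R)^-1 - (n.+1%:R)^-1 = (n%:R * (n%:R + 1))^-1 :> R.
    by rewrite -natr1; field; rewrite Hn0 Hn1.
  by rewrite invr_gt0 mulr_gt0 // ltr_wpDl ?ler0n.
have Eq1 : q R n.+1 k.+1 = k.+1%:R / (n%:R + 1) * (Hs R k.+1 n + (n%:R)^-1).
  by rewrite /q /= (Hs_recr _ Hk) natr1.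
set S := Hs R k.+1 n.
case: (ltgtP S 1) => HS.
-
  have Hk1 : (0 < k)%N.
    rewrite lt0n; apply/eqP => E; move: HS; rewrite /S E => HS'.
    by move: (lt_trans (H1gt R Hn) HS'); rewrite ltxx.
  apply: (lt_le_trans _ (w_ub R (m := 0) (k := k) _)); last by rewrite leq0n ltnW.
  have Hk0 : (k%:R : R) != 0 by rewrite pnatr_eq0 -lt0n.
  have Eq2 : q R n k = k%:R / n%:R * ((k%:R)^-1 + S).
    by rewrite /q eqn0Ngt Hk1 /= (Hs_ltn _ Hk).
  rewrite Eq1 Eq2 -subr_gt0.
  have -> : k%:R / n%:R * ((k%:R)^-1 + S) - k.+1%:R / (n%:R + 1) * (S + (n%:R)^-1)
     = (n%:R - k%:R) * (1 - S) / (n%:R * (n%:R + 1)) :> R.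
    by rewrite -natr1; field; rewrite Hn0 Hn1 Hk0.
  apply: divr_gt0; last by rewrite mulr_gt0 // ltr_wpDl ?ler0n.
  by rewrite mulr_gt0 // subr_gt0 // ltr_nat; apply: leq_trans Hk.
-
  have Hkn : (k.+1 < n)%N.
    rewrite ltn_neqAle Hk andbT; apply/eqP => E.
    by move: HS; rewrite /S E Hs_geq // ltr10.
  apply: (lt_le_trans _ (w_ub R (m := 0) (k := k.+1) _)); last by rewrite leq0n.
  have Eq2 : q R n k.+1 = k.+1%:R / n%:R * S by [].
  rewrite Eq1 Eq2 -subr_gt0.
  have -> : k.+1%:R / n%:R * S - k.+1%:R / (n%:R + 1) * (S + (n%:R)^-1)
     = k.+1%:R * (S - 1) / (n%:R * (n%:R + 1)) :> R.
    by field; rewrite Hn0 Hn1.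
  apply: divr_gt0; last by rewrite mulr_gt0 // ltr_wpDl ?ler0n.
  by rewrite mulr_gt0 ?ltr0n // subr_gt0.
- by move: (Hs_ne1 R Hn (ltn0Sn k)); rewrite -/S HS eqxx.
Qed.

Lemma UA_lt (R : realType) n a b : (3 <= n)%N -> (a < b)%N -> (b <= n)%N ->
  (forall j, (j <= n)%N -> q R n j <= q R n a) -> q R n b < q R n a.
Proof.
move=> Hn Hab Hb Hmax.
have Han : (a < n)%N by apply: leq_trans Hab Hb.
have H1 : Hs R a.+1 n <= 1.
  have := Hmax a.+1 Han; rewrite -subr_le0 (Qstep _ Han).
  by rewrite pmulr_lle0 ?invr_gt0 ?ltr0n ?subr_le0 //; lia.
have H2 : Hs R a.+1 n < 1 by rewrite lt_def H1 andbT eq_sym; apply: Hs_ne1.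
by apply: q_sdec => //; rewrite Hab Hb.
Qed.

Lemma UA (R : realType) n a b : (3 <= n)%N -> (a <= n)%N -> (b <= n)%N ->
  (forall j, (j <= n)%N -> q R n j <= q R n a) -> q R n b = q R n a -> b = a.
Proof.
move=> Hn Ha Hb Hmax Eq.
case: (ltngtP a b) => H //.
- by have := UA_lt Hn H Hb Hmax; rewrite Eq ltxx.
- have Hmax' : forall j, (j <= n)%N -> q R n j <= q R n b by move=> j Hj; rewrite Eq; apply: Hmax.
  by have := UA_lt Hn H Ha Hmax'; rewrite Eq ltxx.
Qed.

Theorem theorem5p1 (R : realType) :
  (forall n : nat, (3 <= n)%N -> V R n.+1 < V R n) /\
  (forall n : nat, (3 <= n)%N ->
     exists! k : nat, (1 <= k <= n)%N /\
       (forall k' : nat, (1 <= k' <= n)%N ->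
          winprob R n (thr n k') <= winprob R n (thr n k))).
Proof.
split.
  move=> n Hn; rewrite !V_eq //; last by lia.
  have [k [Hk Ek]] := w0_att R (ltn0Sn n).
  by rewrite Ek; apply: strict.
move=> n Hn.
have Hn0 : (0 < n)%N by lia.
have [k0 [Hk0 Ek0]] := w0_att R Hn0.
have Hmax : forall j, (j <= n)%N -> q R n j <= q R n k0.
  by move=> j Hj; rewrite -Ek0; apply: w_ub; rewrite leq0n.
exists k0.+1; split.
  split; first by rewrite ltn0Sn Hk0.
  move=> k' /andP [Hk1 Hk2]; case: k' Hk1 Hk2 => [//|k'] _ Hk2.
  by rewrite !winprob_thr //; apply: Hmax; apply: ltnW.
move=> k1 [/andP [Hk1 Hk2] Hmax1].
case: k1 Hk1 Hk2 Hmax1 => [//|k1] _ Hk2 Hmax1.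
have E1 := Hmax1 k0.+1 (ltac:(rewrite ltn0Sn Hk0 //)).
rewrite !winprob_thr // in E1.
apply/eqP; rewrite eqSS eq_sym; apply/eqP.
apply: (UA (R := R) Hn (ltnW Hk0) (ltnW Hk2) Hmax).
by apply/eqP; rewrite eq_le Hmax ?(ltnW Hk2) // E1.
Qed.
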